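(* Consider the equatorial trapped waves propagating eastward over a constant underlying current $c_0$, given in Lagrangian labels $(q,r,s)$ (with $q\in\mathbb{R}$, $r\le r_0<0$, $r-f(s)\le r_0$) by \[ x=q-c_0t-\tfrac1k e^{k[r-f(s)]}\sin[k(q-ct)],\qquad y=s,\qquad z=r+\tfrac1k e^{k[r-f(s)]}\cos[k(q-ct)], \] where $f(s)=\frac{c\beta}{2\gamma}s^2$, $\gamma=2\Omega c_0+g>0$, and the wave speed satisfies the dispersion relation $c=\frac{\sqrt{\Omega^2+k(2\Omega c_0+g)}-\Omega}{k}$ with $c_0\neq c$. If the wave steepness at the equator satisfies \[ e^{kr_0}>\frac{3\Omega+\sqrt{\Omega^2+k(2\Omega c_0+g)}}{\Omega+3\sqrt{\Omega^2+k(2\Omega c_0+g)}} \] (the right-hand side being greater than $1/3$, and close to $1/3$ since $\Omega$ is small), then this flow is unstable to short-wavelength perturbations, i.e. there is a fluid particle trajectory with initial position $\mathbf{X}_0$ for which the exponent $\Lambda(\mathbf{X}_0)$ defined below is strictly positive.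
   Context: Setting: $\beta$-plane approximation of geophysical flow near the equator, with $x$ pointing east, $y$ north, $z$ vertically up, constant density $\rho$, velocity $\mathbf{U}=(u,v,w)$, pressure $P$, Earth rotation speed $\Omega>0$, gravity $g>0$, $\beta=2\Omega/R$ ($R$ the Earth radius), wavenumber $k>0$, wave speed $c>0$, current strength $c_0$ (with $2\Omega c_0+g>0$). The governing equations are $u_t+uu_x+vu_y+wu_z+2\Omega w-\beta y v=-P_x/\rho$, $v_t+uv_x+vv_y+wv_z+\beta y u=-P_y/\rho$, $w_t+uw_x+vw_y+ww_z-2\Omega u=-P_z/\rho-g$, $\nabla\cdot\mathbf U=0$, with free-surface kinematic and constant-pressure boundary conditions and $(u,v)\to(-c_0,0)$ at great depth; the flow above (with $v\equiv0$) solves these with an appropriate pressure. The wave steepness at latitude $s$ is $e^{k(r-f(s))}$, maximal value $e^{kr_0}$ at the equator. Short-wavelength instability: for a perturbation $\varepsilon\,\mathbf b\,e^{i\Phi/\delta}$ with $\Phi(\mathbf X,0)=\mathbf X\cdot\xi_0$, $\mathbf b(\cdot,0)=\mathbf b_0$, $\xi_0\cdot\mathbf b_0=0$, the position $\mathbf X=(x,y,z)$, wave vector $\xi=\nabla\Phi$ and amplitude $\mathbf b$ evolve by $\dot{\mathbf X}=\mathbf U(\mathbf X,t)$, $\dot\xi=-(\nabla\mathbf U)^T\xi$, $\dot{\mathbf b}=-L\mathbf b-(\nabla\mathbf U)\mathbf b+\big([L\mathbf b+2(\nabla\mathbf U)\mathbf b]\cdot\xi\big)\xi/|\xi|^2$,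 with $\mathbf X(0)=\mathbf X_0$, $\xi(0)=\xi_0$, $\mathbf b(0)=\mathbf b_0$, where $\nabla\mathbf U$ is the matrix with rows $(u_x,v_x,w_x)$, $(u_y,v_y,w_y)$, $(u_z,v_z,w_z)$ and $L=\begin{pmatrix}0&-\beta y&2\Omega\\ \beta y&0&0\\ -2\Omega&0&0\end{pmatrix}$. The instability exponent is $\Lambda(\mathbf X_0)=\limsup_{t\to\infty}\frac1t\ln\Big(\sup_{|\xi_0|=|\mathbf b_0|=1,\ \xi_0\cdot\mathbf b_0=0}|\mathbf b(t)|\Big)$, and the flow is called unstable (to short-wavelength perturbations) if $\Lambda(\mathbf X_0)>0$ for some trajectory. *)

(* Defs.v *)
From Stdlib Require Import Reals ClassicalEpsilon.
From Coquelicot Require Import Coquelicot.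
Open Scope R_scope.

Definition V3 : Type := (R * R * R)%type.
Definition v1 (a : V3) : R := fst (fst a).
Definition v2 (a : V3) : R := snd (fst a).
Definition v3 (a : V3) : R := snd a.
Definition mk3 (a b c : R) : V3 := (a, b, c).
Definition dot3 (a b : V3) : R := v1 a * v1 b + v2 a * v2 b + v3 a * v3 b.
Definition norm3 (a : V3) : R := sqrt (dot3 a a).
Definition add3 (a b : V3) : V3 := mk3 (v1 a + v1 b) (v2 a + v2 b) (v3 a + v3 b).
Definition scal3 (l : R) (a : V3) : V3 := mk3 (l * v1 a) (l * v2 a) (l * v3 a).
Definition opp3 (a : V3) : V3 := scal3 (-1) a.
Definition comp3 (i : nat) (a : V3) : R :=
  match i with 0%nat => v1 a | 1%nat => v2 a | _ => v3 a end.
Definition e3 (j : nat) : V3 :=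
  match j with 0%nat => mk3 1 0 0 | 1%nat => mk3 0 1 0 | _ => mk3 0 0 1 end.

Definition M3 : Type := nat -> nat -> R.
Definition mulMV (M : M3) (a : V3) : V3 :=
  mk3 (M 0%nat 0%nat * v1 a + M 0%nat 1%nat * v2 a + M 0%nat 2%nat * v3 a)
      (M 1%nat 0%nat * v1 a + M 1%nat 1%nat * v2 a + M 1%nat 2%nat * v3 a)
      (M 2%nat 0%nat * v1 a + M 2%nat 1%nat * v2 a + M 2%nat 2%nat * v3 a).
Definition transp (M : M3) : M3 := fun i j => M j i.

(* Physical parameters: Om = Omega, g, Re = Earth radius, k, c0. *)
Definition beta (Om Re : R) : R := 2 * Om / Re.
Definition gamma (Om g c0 : R) : R := 2 * Om * c0 + g.
Definition wave_speed (Om g k c0 : R) : R :=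
  (sqrt (Om ^ 2 + k * (2 * Om * c0 + g)) - Om) / k.
Definition fshape (Om g Re k c0 : R) (s : R) : R :=
  wave_speed Om g k c0 * beta Om Re / (2 * gamma Om g c0) * s ^ 2.

Definition label_ok (Om g Re k c0 r0 : R) (L : V3) : Prop :=
  v2 L <= r0 /\ v2 L - fshape Om g Re k c0 (v3 L) <= r0.

Definition lagr (Om g Re k c0 : R) (L : V3) (t : R) : V3 :=
  let q := v1 L in let r := v2 L in let s := v3 L in
  let c := wave_speed Om g k c0 in
  let ee := exp (k * (r - fshape Om g Re k c0 s)) in
  mk3 (q - c0 * t - / k * ee * sin (k * (q - c * t)))
      s
      (r + / k * ee * cos (k * (q - c * t))).

Definition lagr_vel (Om g Re k c0 : R) (L : V3) (t : R) : V3 :=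
  mk3 (Derive (fun tau => v1 (lagr Om g Re k c0 L tau)) t)
      (Derive (fun tau => v2 (lagr Om g Re k c0 L tau)) t)
      (Derive (fun tau => v3 (lagr Om g Re k c0 L tau)) t).

Definition in_fluid (Om g Re k c0 r0 : R) (t : R) (X : V3) : Prop :=
  exists L, label_ok Om g Re k c0 r0 L /\ lagr Om g Re k c0 L t = X.

Lemma V3_inhabited : inhabited V3.
Proof. exact (inhabits (mk3 0 0 0)). Qed.

(* Eulerian velocity field U(X, t): velocity of the particle at X at time t
   (the Lagrangian map is one-to-one, so the label is unique; outside the
   fluid domain the value is irrelevant). *)
Definition U (Om g Re k c0 r0 : R) (X : V3) (t : R) : V3 :=
  lagr_vel Om g Re k c0
    (epsilon V3_inhabited
       (fun L => label_ok Om g Re k c0 r0 L /\ lagr Om g Re k c0 L t = X)) t.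

Definition gradU (Om g Re k c0 r0 : R) (X : V3) (t : R) : M3 :=
  fun i j => Derive (fun h => comp3 i (U Om g Re k c0 r0 (add3 X (scal3 h (e3 j))) t)) 0.

Definition Lmat (Om Re y : R) : M3 :=
  fun i j =>
    match i, j with
    | 0%nat, 1%nat => - (beta Om Re * y)
    | 0%nat, 2%nat => 2 * Om
    | 1%nat, 0%nat => beta Om Re * y
    | 2%nat, 0%nat => - (2 * Om)
    | _, _ => 0
    end.

Definition has_deriv3 (F : R -> V3) (t : R) (v : V3) : Prop :=
  is_derive (fun tau => v1 (F tau)) t (v1 v) /\
  is_derive (fun tau => v2 (F tau)) t (v2 v) /\
  is_derive (fun tau => v3 (F tau)) t (v3 v).

Definition wkb_solution (Om g Re k c0 r0 : R) (X0 xi0 b0 : V3)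
    (X xi b : R -> V3) : Prop :=
  X 0 = X0 /\ xi 0 = xi0 /\ b 0 = b0 /\
  forall t, 0 <= t ->
    let G := gradU Om g Re k c0 r0 (X t) t in
    let Lm := Lmat Om Re (v2 (X t)) in
    has_deriv3 X t (U Om g Re k c0 r0 (X t) t) /\
    has_deriv3 xi t (opp3 (mulMV (transp G) (xi t))) /\
    has_deriv3 b t
      (add3 (opp3 (add3 (mulMV Lm (b t)) (mulMV G (b t))))
            (scal3 (dot3 (add3 (mulMV Lm (b t)) (scal3 2 (mulMV G (b t)))) (xi t)
                    / (norm3 (xi t)) ^ 2) (xi t))).

Definition sup_amp (Om g Re k c0 r0 : R) (X0 : V3) (t : R) : Rbar :=
  Rbar_lub (fun v => exists xi0 b0 X xi b,
    norm3 xi0 = 1 /\ norm3 b0 = 1 /\ dot3 xi0 b0 = 0 /\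
    wkb_solution Om g Re k c0 r0 X0 xi0 b0 X xi b /\
    v = Finite (norm3 (b t))).

(* (1/t) ln (sup ...), extended-real valued (ln 0 = -oo, ln (+oo) = +oo). *)
Definition growth_rate (Om g Re k c0 r0 : R) (X0 : V3) (t : R) : Rbar :=
  match sup_amp Om g Re k c0 r0 X0 t with
  | Finite v => match Rlt_dec 0 v with
                | left _ => Finite (ln v / t)
                | right _ => m_infty
                end
  | p_infty => p_infty
  | m_infty => m_infty
  end.

Definition limsup_infty (F : R -> Rbar) : Rbar :=
  Rbar_glb (fun w => exists T, w = Rbar_lub (fun v => exists t, T <= t /\ v = F t)).

Definition Lambda (Om g Re k c0 r0 : R) (X0 : V3) : Rbar :=
  limsup_infty (growth_rate Om g Re k c0 r0 X0).

(* Main.v *)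
Require Import Defs.
From Stdlib Require Import Reals Lra Psatz ClassicalEpsilon FunctionalExtensionality.
From Coquelicot Require Import Coquelicot.
Open Scope R_scope.

Lemma exp_mono x y : x <= y -> exp x <= exp y.
Proof. intros [H|H]. left; apply exp_increasing; auto. subst; lra. Qed.

Lemma sin_sq_le x : sin x ^ 2 <= x ^ 2.
Proof.
  assert (Hp : forall y, 0 <= y -> sin y ^ 2 <= y ^ 2).
  { intros y Hy. destruct (Req_dec y 0) as [->|Hy0].
    - rewrite sin_0; lra.
    - assert (sin y < y) by (apply sin_lt_x; lra).
      destruct (Rle_lt_dec y 1).
      + assert (0 <= sin y) by (apply sin_ge_0; pose proof PI2_1; lra). nra.
      + pose proof (SIN_bound y). nra. }
  destruct (Rle_lt_dec 0 x). apply Hp; auto.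
  replace (sin x ^ 2) with (sin (-x) ^ 2) by (rewrite sin_neg; ring).
  replace (x ^ 2) with ((-x) ^ 2) by ring. apply Hp; lra.
Qed.

Lemma one_m_cos d : 1 - cos d <= d ^ 2 / 2.
Proof.
  replace d with (2 * (d/2)) at 1 by field. rewrite cos_2a_sin.
  pose proof (sin_sq_le (d/2)). simpl in H. nra.
Qed.

Lemma exp_diff_sq k r1 r2 r0 : 0 < k -> r1 <= r0 -> r2 <= r0 ->
  (exp (k*r1) - exp (k*r2)) ^ 2 <= exp (k*r0) ^ 2 * k ^ 2 * (r1 - r2) ^ 2.
Proof.
  intros hk.
  assert (G : forall a b, b <= a -> a <= r0 ->
    (exp (k*a) - exp (k*b)) ^ 2 <= exp (k*r0) ^ 2 * k ^ 2 * (a - b) ^ 2).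
  { intros a b hab ha.
    assert (E : exp (k*b) = exp (k*a) * exp (k*(b-a))).
    { rewrite <- exp_plus. f_equal; ring. }
    pose proof (exp_ineq1_le (k*(b-a))).
    assert (exp (k*(b-a)) <= 1) by (rewrite <- exp_0; apply exp_mono; nra).
    assert (exp (k*a) <= exp (k*r0)) by (apply exp_mono; nra).
    pose proof (exp_pos (k*a)).
    assert (0 <= exp (k*a) - exp (k*b) <= exp (k*r0) * (k * (a - b))).
    { rewrite E. split. nra. nra. }
    assert (0 <= k*(a-b)) by nra.
    replace (exp (k*r0) ^ 2 * k ^ 2 * (a - b) ^ 2) with ((exp (k*r0) * (k*(a-b)))^2) by ring.
    nra. }
  intros h1 h2. destruct (Rle_lt_dec r2 r1).
  apply G; lra.
  replace ((exp (k*r1) - exp (k*r2)) ^ 2) with ((exp (k*r2) - exp (k*r1)) ^ 2) by ring.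
  replace ((r1 - r2)^2) with ((r2-r1)^2) by ring. apply G; lra.
Qed.

Lemma W_lip k r0 q1 r1 q2 r2 (u1 u2 : R) : 0 < k -> r1 <= r0 -> r2 <= r0 ->
  u1 - u2 = k * (q1 - q2) ->
  (exp (k*r1) * sin u1 - exp (k*r2) * sin u2) ^ 2 +
  (exp (k*r1) * cos u1 - exp (k*r2) * cos u2) ^ 2
  <= exp (k*r0) ^ 2 * (k ^ 2 * ((q1 - q2) ^ 2 + (r1 - r2) ^ 2)).
Proof.
  intros hk h1 h2 hu.
  set (A1 := exp (k*r1)). set (A2 := exp (k*r2)).
  assert (Id : (A1 * sin u1 - A2 * sin u2) ^ 2 + (A1 * cos u1 - A2 * cos u2) ^ 2
     = (A1 - A2) ^ 2 + 2 * A1 * A2 * (1 - cos (u1 - u2))).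
  { rewrite cos_minus. pose proof (sin2_cos2 u1). pose proof (sin2_cos2 u2).
    unfold Rsqr in *. nra. }
  rewrite Id. clear Id.
  pose proof (exp_diff_sq k r1 r2 r0 hk h1 h2). fold A1 A2 in H.
  pose proof (one_m_cos (u1 - u2)) as H0.
  assert (Hsq : (u1 - u2) ^ 2 = (k * (q1 - q2)) ^ 2) by (rewrite hu; ring). rewrite Hsq in H0.
  assert (A1 <= exp (k*r0)) by (apply exp_mono; nra).
  assert (A2 <= exp (k*r0)) by (apply exp_mono; nra).
  assert (0 < A1) by apply exp_pos. assert (0 < A2) by apply exp_pos.
  assert (0 <= 1 - cos (u1 - u2)) by (pose proof (COS_bound (u1-u2)); lra).
  assert (A1 * A2 <= exp (k*r0) ^ 2) by nra.
  assert (2 * A1 * A2 * (1 - cos (u1 - u2)) <= exp (k*r0)^2 * (k^2 * (q1-q2)^2)).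
  { apply Rle_trans with (2 * (A1*A2) * ((k * (q1 - q2)) ^ 2 / 2)).
    - assert (0 <= A1 * A2) by nra.
      replace (2 * A1 * A2 * (1 - cos (u1 - u2))) with (2 * (A1 * A2) * (1 - cos (u1 - u2))) by ring.
      apply Rmult_le_compat_l; [lra|]. lra.
    - assert (0 <= (k * (q1 - q2)) ^ 2) by nra.
      replace (exp (k * r0) ^ 2 * (k ^ 2 * (q1 - q2) ^ 2)) with (exp (k * r0) ^ 2 * (k * (q1 - q2)) ^ 2) by ring.
      nra. }
  nra.
Qed.

Lemma sq_bound x y : x^2 <= y^2 -> 0 <= y -> -y <= x <= y.
Proof.
  intros H hy. split.
  - destruct (Rle_lt_dec (-y) x); auto.
    assert (y*y < (-x)*(-x)) by (apply Rmult_le_0_lt_compat; lra). nra.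
  - destruct (Rle_lt_dec x y); auto.
    assert (y*y < x*x) by (apply Rmult_le_0_lt_compat; lra). nra.
Qed.

Lemma geo_S1 m dq dr Eq Ez : 0 <= m < 1 ->
  Eq^2 + Ez^2 <= m^2 * (dq^2 + dr^2) ->
  (1-m)^2 * (dq^2 + dr^2) <= (dq+Eq)^2 + (dr+Ez)^2.
Proof.
  intros hm H.
  set (n := sqrt (dq^2+dr^2)). set (e := sqrt (Eq^2+Ez^2)).
  assert (hn : n^2 = dq^2+dr^2) by (unfold n; rewrite <- Rsqr_pow2; apply Rsqr_sqrt; nra).
  assert (he : e^2 = Eq^2+Ez^2) by (unfold e; rewrite <- Rsqr_pow2; apply Rsqr_sqrt; nra).
  assert (n0 : 0 <= n) by apply sqrt_pos. assert (e0 : 0 <= e) by apply sqrt_pos.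
  assert (hem : e <= m * n).
  { assert (hmn : 0 <= m * n) by nra.
    assert (e^2 <= (m*n)^2) by (rewrite he; replace ((m*n)^2) with (m^2*n^2) by ring; rewrite hn; lra).
    destruct (Rle_lt_dec e (m*n)); auto.
    assert ((m*n)*(m*n) < e*e) by (apply Rmult_le_0_lt_compat; lra). nra. }
  assert (cs : (dq*Eq + dr*Ez)^2 <= (n*e)^2).
  { replace ((n*e)^2) with (n^2*e^2) by ring. rewrite hn, he.
    assert (0 <= (dq*Ez - dr*Eq)^2) by apply pow2_ge_0.
    assert ((dq^2+dr^2)*(Eq^2+Ez^2) - (dq*Eq + dr*Ez)^2 = (dq*Ez - dr*Eq)^2) by ring. lra. }
  assert (cs2 : - (n*e) <= dq*Eq + dr*Ez) by (destruct (sq_bound _ _ cs); [apply Rmult_le_pos; auto|]; lra).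
  assert (0 <= (1-m)*n <= n - e) by nra.
  nra.
Qed.

Lemma geo_S2 m dq dr Eq Ez : 0 <= m < 1 ->
  Eq^2 + Ez^2 <= m^2 * (dq^2 + dr^2) -> 0 <= dr ->
  (1-m)*dr - Rabs (dq+Eq) / (1-m) <= dr + Ez.
Proof.
  intros hm H hdr.
  set (d := dq + Eq). set (p := / (1-m)).
  assert (hp : p * (1 - m) = 1) by (unfold p; field; lra).
  assert (p1 : 1 <= p) by (unfold p; rewrite <- Rinv_1; apply Rinv_le_contravar; lra).
  replace (Rabs d / (1-m)) with (Rabs d * p) by (unfold p; field; lra).
  assert (ha : Rabs d ^2 = d^2) by (rewrite <- Rsqr_pow2, <- Rsqr_abs, Rsqr_pow2; reflexivity).
  assert (ha0 : 0 <= Rabs d) by apply Rabs_pos.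
  assert (Hq : m^2 * dq^2 - Eq^2 <= d^2 * p^2).
  { replace Eq with (d - dq) by (unfold d; ring).
    assert (hm2 : 0 < 1 - m^2) by nra.
    assert (key : d^2 * p^2 + (d - dq)^2 - m^2 * dq^2 =
       (1 - m^2) * (dq - d / (1-m^2))^2 + d^2 * (p^2 + 1 - 1/(1-m^2))).
    { field. lra. }
    assert (0 <= p^2 + 1 - 1/(1-m^2)).
    { assert (1/(1-m^2) <= p^2).
      { replace (p^2) with (1/((1-m)^2)) by (unfold p; field; lra).
        apply Rmult_le_compat_l; [lra|]. apply Rinv_le_contravar; nra. }
      nra. }
    assert (0 <= (1 - m^2) * (dq - d / (1-m^2))^2) by (apply Rmult_le_pos; [lra|apply pow2_ge_0]).
    assert (0 <= d^2 * (p^2 + 1 - 1/(1-m^2))) by (apply Rmult_le_pos; [apply pow2_ge_0|lra]).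
    lra. }
  assert (Hz : Ez^2 <= (m*dr + Rabs d * p)^2).
  { assert (0 <= m * dr * (Rabs d * p)) by (apply Rmult_le_pos; apply Rmult_le_pos; lra).
    assert (Ez^2 <= m^2*dr^2 + d^2*p^2) by lra.
    assert ((m*dr + Rabs d * p)^2 = m^2*dr^2 + 2 * (m*dr*(Rabs d*p)) + Rabs d^2 * p^2) by ring.
    rewrite ha in H2. lra. }
  assert (0 <= m*dr + Rabs d * p) by nra.
  assert (- Ez <= m*dr + Rabs d * p).
  { destruct (sq_bound Ez (m*dr + Rabs d * p)); auto; lra. }
  nra.
Qed.

Lemma geo_S3 m dq dr Eq Ez : 0 <= m < 1 ->
  Eq^2 + Ez^2 <= m^2 * (dq^2 + dr^2) -> dq + Eq = 0 ->
  (1 - m^2) * dq^2 <= m^2 * dr^2 /\ (dr + Ez)^2 <= 2 / (1 - m^2) * dr^2.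
Proof.
  intros hm H hd. replace Eq with (-dq) in H by lra.
  assert (h1 : (1 - m^2) * dq^2 <= m^2 * dr^2) by nra.
  split; auto.
  assert (hm2 : 0 < 1 - m^2) by nra.
  assert (dq^2 <= m^2 * dr^2 / (1 - m^2)).
  { apply (Rmult_le_reg_l (1 - m^2)); auto.
    replace ((1 - m ^ 2) * (m ^ 2 * dr ^ 2 / (1 - m ^ 2))) with (m^2*dr^2) by (field; lra). lra. }
  assert ((dr+Ez)^2 <= 2*dr^2 + 2*Ez^2).
  { assert (0 <= (dr - Ez)^2) by apply pow2_ge_0.
    assert (2*dr^2 + 2*Ez^2 - (dr+Ez)^2 = (dr-Ez)^2) by ring. lra. }
  assert (2*dr^2 + 2*(m^2*(dq^2+dr^2)) <= 2 / (1 - m^2) * dr^2).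
  { apply Rle_trans with (2*dr^2 + 2*(m^2*(m^2 * dr^2 / (1 - m^2) + dr^2))).
    - assert (0 <= m^2) by nra. nra.
    - right. field. lra. }
  nra.
Qed.

Definition phiF k c c0 t q r := q - c0 * t - / k * exp (k * r) * sin (k * (q - c * t)).
Definition chiF k c t q r := r + / k * exp (k * r) * cos (k * (q - c * t)).

Lemma m_bounds k r0 : 0 < k -> r0 < 0 -> 0 < exp (k*r0) < 1.
Proof. intros. split. apply exp_pos. rewrite <- exp_0. apply exp_increasing. nra. Qed.

Lemma F_bound k c c0 t r0 q1 r1 q2 r2 : 0 < k -> r1 <= r0 -> r2 <= r0 ->
  ((phiF k c c0 t q1 r1 - phiF k c c0 t q2 r2) - (q1 - q2))^2 +
  ((chiF k c t q1 r1 - chiF k c t q2 r2) - (r1 - r2))^2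
  <= exp (k*r0)^2 * ((q1-q2)^2 + (r1-r2)^2).
Proof.
  intros hk h1 h2.
  pose proof (W_lip k r0 q1 r1 q2 r2 (k*(q1-c*t)) (k*(q2-c*t)) hk h1 h2 ltac:(ring)) as W.
  unfold phiF, chiF.
  set (A1 := exp (k*r1)) in *. set (A2 := exp (k*r2)) in *.
  set (s1 := sin (k*(q1-c*t))) in *. set (s2 := sin (k*(q2-c*t))) in *.
  set (c1 := cos (k*(q1-c*t))) in *. set (c2 := cos (k*(q2-c*t))) in *.
  replace ((q1 - c0 * t - / k * A1 * s1 - (q2 - c0 * t - / k * A2 * s2) - (q1 - q2)) ^ 2 +
     (r1 + / k * A1 * c1 - (r2 + / k * A2 * c2) - (r1 - r2)) ^ 2)
   with (/k^2 * ((A1 * s1 - A2 * s2) ^ 2 + (A1 * c1 - A2 * c2) ^ 2)) by (field; lra).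
  apply Rle_trans with (/k^2 * (exp (k * r0) ^ 2 * (k ^ 2 * ((q1 - q2) ^ 2 + (r1 - r2) ^ 2)))).
  apply Rmult_le_compat_l; auto. left; apply Rinv_0_lt_compat; nra.
  right; field; lra.
Qed.

Section Plane.
Variables (k c c0 t r0 : R).
Hypothesis hk : 0 < k.
Hypothesis hr0 : r0 < 0.
Let m := exp (k*r0).
Let P := phiF k c c0 t.
Let X := chiF k c t.

Lemma mb : 0 <= m < 1.
Proof. pose proof (m_bounds k r0 hk hr0). unfold m; lra. Qed.

Lemma F_S1 q1 r1 q2 r2 : r1 <= r0 -> r2 <= r0 ->
  (1-m)^2 * ((q1-q2)^2 + (r1-r2)^2) <= (P q1 r1 - P q2 r2)^2 + (X q1 r1 - X q2 r2)^2.
Proof.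
  intros h1 h2. pose proof (F_bound k c c0 t r0 q1 r1 q2 r2 hk h1 h2) as H.
  pose proof (geo_S1 m (q1-q2) (r1-r2) _ _ mb H).
  unfold P, X. replace (P q1 r1 - P q2 r2) with ((q1 - q2) + ((P q1 r1 - P q2 r2) - (q1 - q2))) by ring.
  lra.
Qed.

Lemma F_S2 q1 r1 q2 r2 : r1 <= r0 -> r2 <= r0 -> r2 <= r1 ->
  (1-m)*(r1-r2) - Rabs (P q1 r1 - P q2 r2) / (1-m) <= X q1 r1 - X q2 r2.
Proof.
  intros h1 h2 h3. pose proof (F_bound k c c0 t r0 q1 r1 q2 r2 hk h1 h2) as H.
  pose proof (geo_S2 m (q1-q2) (r1-r2) _ _ mb H ltac:(lra)).
  unfold P, X.
  replace (q1 - q2 + (phiF k c c0 t q1 r1 - phiF k c c0 t q2 r2 - (q1 - q2))) with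
    (phiF k c c0 t q1 r1 - phiF k c c0 t q2 r2) in H0 by ring.
  lra.
Qed.

Lemma F_S3 q1 r1 q2 r2 : r1 <= r0 -> r2 <= r0 -> P q1 r1 = P q2 r2 ->
  (X q1 r1 - X q2 r2)^2 <= 2 / (1 - m^2) * (r1-r2)^2.
Proof.
  intros h1 h2 h3. pose proof (F_bound k c c0 t r0 q1 r1 q2 r2 hk h1 h2) as H.
  destruct (geo_S3 m (q1-q2) (r1-r2) _ _ mb H) as [_ H2].
  unfold P in h3. lra.
  unfold X. replace (r1 - r2 + (chiF k c t q1 r1 - chiF k c t q2 r2 - (r1 - r2))) with
    (chiF k c t q1 r1 - chiF k c t q2 r2) in H2 by ring. exact H2.
Qed.

End Plane.

Lemma lip_cont (f : R -> R) K : 0 <= K ->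
  (forall a b, (f a - f b)^2 <= K * (a-b)^2) -> forall x, continuity_pt f x.
Proof.
  intros hK H x. unfold continuity_pt, continue_in, limit1_in, limit_in.
  intros eps heps. exists (eps / (K+1)). split.
  apply Rdiv_lt_0_compat; lra.
  intros y [_ hy]. simpl in *. unfold R_dist in *.
  set (d := eps/(K+1)) in *.
  assert (hd : d * (K+1) = eps) by (unfold d; field; lra).
  assert (hd0 : 0 < d) by (unfold d; apply Rdiv_lt_0_compat; lra).
  pose proof (H y x).
  assert ((y - x)^2 < d^2).
  { rewrite <- (Rsqr_pow2 (y-x)), (Rsqr_abs (y-x)), Rsqr_pow2.
    pose proof (Rabs_pos (y-x)). nra. }
  assert (Hf : (f y - f x)^2 < eps^2).
  { rewrite <- hd. assert (K * d^2 < (d*(K+1))^2) by nra. nra. }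
  destruct (Rle_lt_dec eps (Rabs (f y - f x))); auto.
  rewrite <- (Rsqr_pow2 (f y - f x)), (Rsqr_abs (f y - f x)), Rsqr_pow2 in Hf. nra.
Qed.

Lemma Rmin_lip a b r0 : (Rmin a r0 - Rmin b r0)^2 <= (a - b)^2.
Proof.
  unfold Rmin; destruct (Rle_dec a r0) as [h1|h1], (Rle_dec b r0) as [h2|h2];
  try apply Rnot_le_lt in h1; try apply Rnot_le_lt in h2.
  - apply Rle_refl.
  - assert (0 <= (b - r0) * (b + r0 - 2*a)) by (apply Rmult_le_pos; lra). nra.
  - assert (0 <= (a - r0) * (a + r0 - 2*b)) by (apply Rmult_le_pos; lra). nra.
  - assert (0 <= (a-b)^2) by apply pow2_ge_0. replace ((r0-r0)^2) with 0 by ring. lra.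
Qed.

Section Exist.
Variables (k c c0 t r0 : R).
Hypothesis hk : 0 < k.
Hypothesis hr0 : r0 < 0.

Lemma phiF_cont r : continuity (fun q => phiF k c c0 t q r).
Proof.
  intro q. apply derivable_continuous_pt. apply ex_derive_Reals_0.
  unfold phiF. auto_derive. auto.
Qed.

Lemma Q_exists r x : r <= r0 -> exists q, phiF k c c0 t q r = x.
Proof.
  intros hr.
  assert (hb : forall q, Rabs (/ k * exp (k * r) * sin (k * (q - c * t))) <= / k).
  { intro q. pose proof (SIN_bound (k * (q - c * t))).
    assert (exp (k*r) <= 1) by (rewrite <- exp_0; apply exp_mono; nra).
    pose proof (exp_pos (k*r)). assert (0 < /k) by (apply Rinv_0_lt_compat; lra).
    set (E := exp (k*r)) in *. set (s := sin (k * (q - c * t))) in *.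
    assert (hs : -1 <= E * s <= 1) by (split; nra).
    replace (/ k * E * s) with (/ k * (E * s)) by ring.
    apply Rabs_le. split.
    - assert (/k * (-1) <= /k * (E*s)) by (apply Rmult_le_compat_l; lra). lra.
    - assert (/k * (E*s) <= /k * 1) by (apply Rmult_le_compat_l; lra). lra. }
  destruct (IVT (fun q => phiF k c c0 t q r - x) (x + c0*t - /k - 1) (x + c0*t + /k + 1)) as [q [_ Hq]].
  - intro y. apply continuity_pt_minus. apply phiF_cont. apply continuity_pt_const. intros a b; auto.
  - assert (0 < /k) by (apply Rinv_0_lt_compat; lra). lra.
  - unfold phiF. pose proof (hb (x + c0 * t - / k - 1)). apply Rabs_le_between in H. lra.
  - unfold phiF. pose proof (hb (x + c0 * t + / k + 1)). apply Rabs_le_between in H. lra.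
  - exists q. lra.
Qed.

Definition Qf (x r : R) : R :=
  epsilon (inhabits 0) (fun q => phiF k c c0 t q (Rmin r r0) = x).

Lemma Qf_spec x r : phiF k c c0 t (Qf x r) (Rmin r r0) = x.
Proof.
  unfold Qf. apply (epsilon_spec (inhabits 0) (fun q => phiF k c c0 t q (Rmin r r0) = x)).
  apply Q_exists. apply Rmin_r.
Qed.

Definition psi (x z r : R) := chiF k c t (Qf x r) (Rmin r r0) - z.

Lemma psi_cont x z : forall r, continuity_pt (psi x z) r.
Proof.
  pose proof (mb k r0 hk hr0) as hm.
  apply (lip_cont _ (2 / (1 - exp (k*r0)^2))).
  { assert (0 < 1 - exp (k*r0)^2) by nra. left; apply Rdiv_lt_0_compat; lra. }
  intros a b. unfold psi.
  replace (chiF k c t (Qf x a) (Rmin a r0) - z - (chiF k c t (Qf x b) (Rmin b r0) - z))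
    with (chiF k c t (Qf x a) (Rmin a r0) - chiF k c t (Qf x b) (Rmin b r0)) by ring.
  eapply Rle_trans.
  apply (F_S3 k c c0 t r0 hk hr0). apply Rmin_r. apply Rmin_r.
  rewrite !Qf_spec. reflexivity.
  apply Rmult_le_compat_l. assert (0 < 1 - exp (k*r0)^2) by nra. left; apply Rdiv_lt_0_compat; lra.
  apply Rmin_lip.
Qed.

Lemma label_exists q0 rs x z : rs < r0 ->
  Rabs (x - phiF k c c0 t q0 rs) <= (1 - exp (k*r0))^2 * (r0 - rs) / 4 ->
  Rabs (z - chiF k c t q0 rs) <= (1 - exp (k*r0))^2 * (r0 - rs) / 4 ->
  exists q r, r <= r0 /\ phiF k c c0 t q r = x /\ chiF k c t q r = z.
Proof.
  intros hrs hx hz.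
  pose proof (mb k r0 hk hr0) as hm.
  set (m := exp (k*r0)) in *.
  set (d := r0 - rs) in *.
  set (del := (1 - m)^2 * d / 4) in *.
  assert (hdel : del * (1 + / (1 - m)) < (1 - m) * d).
  { unfold del. assert (/ (1-m) * (1 - m) = 1) by (field; lra).
    assert (1 <= / (1-m)) by (rewrite <- Rinv_1; apply Rinv_le_contravar; lra).
    assert (0 < d) by (unfold d; lra).
    replace ((1 - m) ^ 2 * d / 4 * (1 + / (1 - m))) with ((1-m) * d * ((1-m) * (1 + / (1-m)) / 4)) by (field; lra).
    assert ((1-m) * (1 + / (1-m)) / 4 < 1).
    { replace ((1-m) * (1 + / (1-m))) with ((1-m) + 1) by (field; lra). lra. }
    assert (0 < (1-m)*d) by nra. nra. }
  assert (hpinv : 0 < / (1 - m)) by (apply Rinv_0_lt_compat; lra).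
  destruct (Ranalysis5.IVT_interv (psi x z) (rs - d) r0) as [r [hr Hr]].
  - intros; apply psi_cont.
  - unfold d; lra.
  -
    pose proof (F_S2 k c c0 t r0 hk hr0 q0 rs (Qf x (rs - d)) (Rmin (rs - d) r0)
      ltac:(lra) (Rmin_r _ _) ltac:(pose proof (Rmin_l (rs-d) r0); unfold d in *; lra)) as H.
    rewrite Qf_spec in H. fold m in H.
    assert (Hmin : Rmin (rs - d) r0 = rs - d) by (apply Rmin_left; unfold d; lra).
    rewrite Hmin in H.
    unfold psi. rewrite Rabs_minus_sym in H. rewrite Hmin.
    replace (rs - (rs - d)) with d in H by ring.
    assert (Rabs (x - phiF k c c0 t q0 rs) / (1 - m) <= del * / (1-m)) by (apply Rmult_le_compat_r; lra).
    apply Rabs_le_between in hz. lra.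
  - pose proof (F_S2 k c c0 t r0 hk hr0 (Qf x r0) (Rmin r0 r0) q0 rs
      (Rmin_r _ _) ltac:(lra) ltac:(rewrite Rmin_left; lra)) as H.
    rewrite Qf_spec in H. fold m in H.
    rewrite Rmin_left in H by lra.
    unfold psi. rewrite Rmin_left by lra.
    assert (Rabs (x - phiF k c c0 t q0 rs) / (1 - m) <= del * / (1-m)) by (apply Rmult_le_compat_r; lra).
    apply Rabs_le_between in hz. fold d in H. lra.
  - exists (Qf x r), r. assert (Rmin r r0 = r) by (apply Rmin_left; lra).
    split; [lra|]. split.
    pose proof (Qf_spec x r) as Hq. rewrite H in Hq. exact Hq.
    unfold psi in Hr. rewrite H in Hr. lra.
Qed.

End Exist.

Lemma mvt_any (f f' : R -> R) a b : (forall x, derivable_pt_lim f x (f' x)) ->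
  exists c, ((a <= c <= b) \/ (b <= c <= a)) /\ f b - f a = f' c * (b - a).
Proof.
  intros H. destruct (Rtotal_order a b) as [h|[h|h]].
  - destruct (MVT_cor2 f f' a b h (fun c _ => H c)) as [c [E hc]].
    exists c. split; [left; lra|]. exact E.
  - subst. exists b. split; [left; lra|]. ring.
  - destruct (MVT_cor2 f f' b a h (fun c _ => H c)) as [c [E hc]].
    exists c. split; [right; lra|]. lra.
Qed.

Lemma lin_bound J11 J12 J21 J22 e11 e12 e21 e22 dq dr hx hz D kap :
  D = J11*J22 - J12*J21 -> 0 < D -> 0 <= kap ->
  Rabs J11 <= 2 -> Rabs J12 <= 2 -> Rabs J21 <= 2 -> Rabs J22 <= 2 ->
  e11^2 <= kap^2 * (dq^2+dr^2) -> e12^2 <= kap^2 * (dq^2+dr^2) ->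
  e21^2 <= kap^2 * (dq^2+dr^2) -> e22^2 <= kap^2 * (dq^2+dr^2) ->
  (J11+e11)*dq + (J12+e12)*dr = hx -> (J21+e21)*dq + (J22+e22)*dr = hz ->
  Rabs (dq - (J22*hx - J12*hz)/D) <= 8*kap*(dq^2+dr^2)/D /\
  Rabs (dr - (J11*hz - J21*hx)/D) <= 8*kap*(dq^2+dr^2)/D.
Proof.
  intros HD hD hkap a11 a12 a21 a22 b11 b12 b21 b22 E1 E2.
  set (N := dq^2+dr^2) in *.
  assert (hN : 0 <= N) by (unfold N; nra).
  set (R1 := e11*dq + e12*dr). set (R2 := e21*dq + e22*dr).
  assert (cs : forall u v, u^2 <= kap^2*N -> v^2 <= kap^2*N -> Rabs (u*dq + v*dr) <= 2*kap*N).
  { intros u v hu hv.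
    assert ((u*dq+v*dr)^2 <= (u^2+v^2)*N).
    { unfold N. assert (0 <= (u*dr - v*dq)^2) by apply pow2_ge_0.
      assert ((u^2+v^2)*(dq^2+dr^2) - (u*dq+v*dr)^2 = (u*dr-v*dq)^2) by ring. lra. }
    assert ((u^2+v^2)*N <= (2*kap*N)^2).
    { replace ((2*kap*N)^2) with (4*(kap^2*N)*N) by ring.
      apply Rle_trans with ((2*(kap^2*N))*N). apply Rmult_le_compat_r; lra.
      apply Rmult_le_compat_r; auto. assert (0 <= kap^2*N) by (apply Rmult_le_pos; nra). lra. }
    assert (0 <= 2*kap*N) by (apply Rmult_le_pos; lra).
    destruct (sq_bound (u*dq+v*dr) (2*kap*N)); [lra|auto|]. apply Rabs_le; lra. }
  pose proof (cs e11 e12 b11 b12) as hR1. pose proof (cs e21 e22 b21 b22) as hR2.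
  fold R1 in hR1. fold R2 in hR2.
  assert (Eq : dq - (J22*hx - J12*hz)/D = - (J22*R1 - J12*R2)/D).
  { rewrite <- E1, <- E2. unfold R1, R2. rewrite HD. field. lra. }
  assert (Er : dr - (J11*hz - J21*hx)/D = - (J11*R2 - J21*R1)/D).
  { rewrite <- E1, <- E2. unfold R1, R2. rewrite HD. field. lra. }
  assert (gen : forall A B U V, Rabs A <= 2 -> Rabs B <= 2 -> Rabs U <= 2*kap*N -> Rabs V <= 2*kap*N ->
     Rabs (- (A*U - B*V)/D) <= 8*kap*N/D).
  { intros A B U V hA hB hU hV.
    unfold Rdiv. rewrite Rabs_mult, Rabs_Ropp, (Rabs_right (/D)) by (left; apply Rinv_0_lt_compat; lra).
    apply Rmult_le_compat_r. left; apply Rinv_0_lt_compat; lra.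
    unfold Rminus. eapply Rle_trans. apply Rabs_triang.
    rewrite Rabs_Ropp, !Rabs_mult.
    assert (Rabs A * Rabs U <= 2 * (2*kap*N)) by (apply Rmult_le_compat; auto; apply Rabs_pos).
    assert (Rabs B * Rabs V <= 2 * (2*kap*N)) by (apply Rmult_le_compat; auto; apply Rabs_pos).
    lra. }
  rewrite Eq, Er. split; apply gen; auto.
Qed.

Section Lin.
Variables (k c c0 t r0 : R).
Hypothesis hk : 0 < k.
Hypothesis hr0 : r0 < 0.

Lemma der_phi_r q x : derivable_pt_lim (fun r => phiF k c c0 t q r) x
   (- (exp (k*x) * sin (k*(q - c*t)))).
Proof.
  apply is_derive_Reals. unfold phiF. auto_derive; auto; unfold Rminus; field; apply Rgt_not_eq; lra.
Qed.
Lemma der_phi_q r x : derivable_pt_lim (fun q => phiF k c c0 t q r) x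
   (1 - exp (k*r) * cos (k*(x - c*t))).
Proof.
  apply is_derive_Reals. unfold phiF. auto_derive; auto; unfold Rminus; field; apply Rgt_not_eq; lra.
Qed.
Lemma der_chi_r q x : derivable_pt_lim (fun r => chiF k c t q r) x
   (1 + exp (k*x) * cos (k*(q - c*t))).
Proof.
  apply is_derive_Reals. unfold chiF. auto_derive; auto; unfold Rminus; field; apply Rgt_not_eq; lra.
Qed.
Lemma der_chi_q r x : derivable_pt_lim (fun q => chiF k c t q r) x
   (- (exp (k*r) * sin (k*(x - c*t)))).
Proof.
  apply is_derive_Reals. unfold chiF. auto_derive; auto; unfold Rminus; field; apply Rgt_not_eq; lra.
Qed.

Lemma Wl q1 r1 q2 r2 : r1 <= r0 -> r2 <= r0 ->
  (exp (k*r1) * sin (k*(q1-c*t)) - exp (k*r2) * sin (k*(q2-c*t)))^2 <= (k*exp (k*r0))^2 * ((q1-q2)^2+(r1-r2)^2) /\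
  (exp (k*r1) * cos (k*(q1-c*t)) - exp (k*r2) * cos (k*(q2-c*t)))^2 <= (k*exp (k*r0))^2 * ((q1-q2)^2+(r1-r2)^2).
Proof.
  intros h1 h2.
  pose proof (W_lip k r0 q1 r1 q2 r2 (k*(q1-c*t)) (k*(q2-c*t)) hk h1 h2 ltac:(ring)) as W.
  replace ((k * exp (k * r0)) ^ 2 * ((q1 - q2) ^ 2 + (r1 - r2) ^ 2)) with
    (exp (k * r0) ^ 2 * (k ^ 2 * ((q1 - q2) ^ 2 + (r1 - r2) ^ 2))) by ring.
  split.
  - assert (0 <= (exp (k * r1) * cos (k * (q1 - c * t)) - exp (k * r2) * cos (k * (q2 - c * t)))^2) by apply pow2_ge_0. lra.
  - assert (0 <= (exp (k * r1) * sin (k * (q1 - c * t)) - exp (k * r2) * sin (k * (q2 - c * t)))^2) by apply pow2_ge_0. lra.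
Qed.

Lemma between_bound a b x r0' : ((a <= x <= b) \/ (b <= x <= a)) -> a <= r0' -> b <= r0' ->
   x <= r0' /\ (x - a)^2 <= (b - a)^2.
Proof. intros [h|h] ha hb; split; try lra; nra. Qed.

Lemma lin_system q0 rs q r : rs <= r0 -> r <= r0 ->
  let a := exp (k*rs) in let th := k*(q0 - c*t) in
  exists e11 e12 e21 e22,
    e11^2 <= (k*exp (k*r0))^2 * ((q-q0)^2+(r-rs)^2) /\
    e12^2 <= (k*exp (k*r0))^2 * ((q-q0)^2+(r-rs)^2) /\
    e21^2 <= (k*exp (k*r0))^2 * ((q-q0)^2+(r-rs)^2) /\
    e22^2 <= (k*exp (k*r0))^2 * ((q-q0)^2+(r-rs)^2) /\
    (1 - a * cos th + e11) * (q - q0) + (- (a * sin th) + e12) * (r - rs)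
      = phiF k c c0 t q r - phiF k c c0 t q0 rs /\
    (- (a * sin th) + e21) * (q - q0) + (1 + a * cos th + e22) * (r - rs)
      = chiF k c t q r - chiF k c t q0 rs.
Proof.
  intros hrs hr a th.
  destruct (mvt_any _ _ rs r (der_phi_r q)) as [z1 [hz1 E1]].
  destruct (mvt_any _ _ q0 q (der_phi_q rs)) as [z2 [hz2 E2]].
  destruct (mvt_any _ _ rs r (der_chi_r q)) as [z3 [hz3 E3]].
  destruct (mvt_any _ _ q0 q (der_chi_q rs)) as [z4 [hz4 E4]].
  exists (- (exp (k*rs) * cos (k*(z2 - c*t)) - a * cos th)),
         (- (exp (k*z1) * sin (k*(q - c*t)) - a * sin th)),
         (- (exp (k*rs) * sin (k*(z4 - c*t)) - a * sin th)),
         (exp (k*z3) * cos (k*(q - c*t)) - a * cos th).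
  destruct (between_bound _ _ _ r0 hz1 hrs hr) as [z1r z1d].
  destruct (between_bound _ _ _ r0 hz3 hrs hr) as [z3r z3d].
  assert (hz2' : (z2 - q0)^2 <= (q - q0)^2) by (destruct hz2; nra).
  assert (hz4' : (z4 - q0)^2 <= (q - q0)^2) by (destruct hz4; nra).
  assert (K0 : 0 <= (k*exp (k*r0))^2) by apply pow2_ge_0.
  unfold a, th.
  split; [|split; [|split; [|split; [|split]]]].
  - destruct (Wl z2 rs q0 rs hrs hrs) as [_ W].
    replace ((- (exp (k * rs) * cos (k * (z2 - c * t)) - exp (k * rs) * cos (k * (q0 - c * t)))) ^ 2)
      with ((exp (k * rs) * cos (k * (z2 - c * t)) - exp (k * rs) * cos (k * (q0 - c * t))) ^ 2) by ring.
    eapply Rle_trans; [apply W|]. apply Rmult_le_compat_l; auto.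
    assert (0 <= (r - rs)^2) by apply pow2_ge_0. replace ((rs - rs)^2) with 0 by ring. lra.
  - destruct (Wl q z1 q0 rs z1r hrs) as [W _].
    replace ((- (exp (k * z1) * sin (k * (q - c * t)) - exp (k * rs) * sin (k * (q0 - c * t)))) ^ 2)
      with ((exp (k * z1) * sin (k * (q - c * t)) - exp (k * rs) * sin (k * (q0 - c * t)))^2) by ring.
    eapply Rle_trans; [apply W|]. apply Rmult_le_compat_l; auto. lra.
  - destruct (Wl z4 rs q0 rs hrs hrs) as [W _].
    replace ((- (exp (k * rs) * sin (k * (z4 - c * t)) - exp (k * rs) * sin (k * (q0 - c * t)))) ^ 2)
      with ((exp (k * rs) * sin (k * (z4 - c * t)) - exp (k * rs) * sin (k * (q0 - c * t))) ^ 2) by ring.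
    eapply Rle_trans; [apply W|]. apply Rmult_le_compat_l; auto.
    assert (0 <= (r - rs)^2) by apply pow2_ge_0. replace ((rs - rs)^2) with 0 by ring. lra.
  - destruct (Wl q z3 q0 rs z3r hrs) as [_ W].
    eapply Rle_trans; [apply W|]. apply Rmult_le_compat_l; auto. lra.
  - replace (phiF k c c0 t q r - phiF k c c0 t q0 rs) with
      ((phiF k c c0 t q r - phiF k c c0 t q rs) + (phiF k c c0 t q rs - phiF k c c0 t q0 rs)) by ring.
    rewrite E1, E2. ring.
  - replace (chiF k c t q r - chiF k c t q0 rs) with
      ((chiF k c t q r - chiF k c t q rs) + (chiF k c t q rs - chiF k c t q0 rs)) by ring.
    rewrite E3, E4. ring.
Qed.

End Lin.

Section InvLin.
Variables (k c c0 t r0 : R).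
Hypothesis hk : 0 < k.
Hypothesis hr0 : r0 < 0.

Lemma inv_lin q0 rs q r : rs < r0 -> r <= r0 ->
  let a := exp (k*rs) in let th := k*(q0 - c*t) in let Dt := 1 - a^2 in
  let hx := phiF k c c0 t q r - phiF k c c0 t q0 rs in
  let hz := chiF k c t q r - chiF k c t q0 rs in
  let m := exp (k*r0) in
  let C := 8 * (k*m) / ((1-m)^2 * Dt) in
  Rabs ((q - q0) - ((1 + a * cos th) * hx + a * sin th * hz)/Dt) <= C * (hx^2+hz^2) /\
  Rabs ((r - rs) - ((1 - a * cos th) * hz + a * sin th * hx)/Dt) <= C * (hx^2+hz^2).
Proof.
  intros hrs hr a th Dt hx hz m C.
  pose proof (mb k r0 hk hr0) as hm. fold m in hm.
  assert (ha : 0 < a < 1).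
  { unfold a. split. apply exp_pos. rewrite <- exp_0. apply exp_increasing. nra. }
  assert (hD : 0 < Dt) by (unfold Dt; nra).
  destruct (lin_system k c c0 t r0 hk q0 rs q r ltac:(lra) hr) as
    (e11 & e12 & e21 & e22 & b11 & b12 & b21 & b22 & E1 & E2).
  fold a th in E1, E2. fold hx in E1. fold hz in E2. fold m in b11, b12, b21, b22.
  assert (hcs : Rabs (cos th) <= 1) by (apply Rabs_le; apply COS_bound).
  assert (hsn : Rabs (sin th) <= 1) by (apply Rabs_le; apply SIN_bound).
  assert (habs : forall u, Rabs u <= 1 -> Rabs (a*u) <= 1).
  { intros u hu. rewrite Rabs_mult, (Rabs_right a) by lra.
    assert (a * Rabs u <= 1 * 1) by (apply Rmult_le_compat; try lra; apply Rabs_pos). lra. }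
  assert (h2 : forall u, Rabs (a*u) <= 1 -> Rabs (1 - a*u) <= 2 /\ Rabs (1 + a*u) <= 2 /\ Rabs (- (a*u)) <= 2).
  { intros u hu. apply Rabs_le_between in hu.
    split; [|split]; try rewrite Rabs_Ropp; apply Rabs_le; lra. }
  destruct (h2 _ (habs _ hcs)) as [J11b [J22b _]].
  destruct (h2 _ (habs _ hsn)) as [_ [_ J12b]].
  destruct (lin_bound (1 - a * cos th) (- (a * sin th)) (- (a * sin th)) (1 + a * cos th)
     e11 e12 e21 e22 (q - q0) (r - rs) hx hz Dt (k*m)) as [L1 L2]; auto.
  { unfold Dt. pose proof (sin2_cos2 th). unfold Rsqr in H. nra. }
  { apply Rmult_le_pos; lra. }
  pose proof (F_S1 k c c0 t r0 hk hr0 q r q0 rs hr ltac:(lra)) as S1.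
  fold m hx hz in S1.
  assert (HN : (q-q0)^2 + (r-rs)^2 <= (hx^2+hz^2) / (1-m)^2).
  { apply (Rmult_le_reg_l ((1-m)^2)). nra.
    replace ((1 - m) ^ 2 * ((hx ^ 2 + hz ^ 2) / (1 - m) ^ 2)) with (hx^2+hz^2) by (field; lra). lra. }
  assert (HC : 8 * (k*m) * ((q-q0)^2 + (r-rs)^2) / Dt <= C * (hx^2+hz^2)).
  { unfold C. replace (8 * (k * m) / ((1 - m) ^ 2 * Dt) * (hx ^ 2 + hz ^ 2)) with
      (8 * (k*m) * ((hx^2+hz^2) / (1-m)^2) / Dt) by (field; lra).
    unfold Rdiv. apply Rmult_le_compat_r. left; apply Rinv_0_lt_compat; lra.
    apply Rmult_le_compat_l. assert (0 <= k*m) by (apply Rmult_le_pos; lra). lra. exact HN. }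
  split.
  - replace ((1 + a * cos th) * hx + a * sin th * hz) with
      ((1 + a * cos th) * hx - (- (a * sin th)) * hz) by ring. lra.
  - replace ((1 - a * cos th) * hz + a * sin th * hx) with
      ((1 - a * cos th) * hz - (- (a * sin th)) * hx) by ring. lra.
Qed.

End InvLin.

Lemma Derive_by_bound (F : R -> R) l del K : 0 < del ->
  (forall h, h <> 0 -> Rabs h < del -> Rabs ((F h - F 0)/h - l) <= K * Rabs h) ->
  Derive F 0 = l.
Proof.
  intros hdel H. unfold Derive.
  replace l with (real (Finite l)) by reflexivity. f_equal.
  apply is_lim_unique. apply is_lim_spec. intros eps.
  simpl. unfold locally', within, locally.
  assert (hK : 0 < Rabs K + 1) by (pose proof (Rabs_pos K); lra).
  assert (he : 0 < Rmin del (eps / (Rabs K + 1))).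
  { apply Rmin_pos; auto. apply Rdiv_lt_0_compat; auto. apply cond_pos. }
  exists (mkposreal _ he). intros y hy hy0.
  unfold ball in hy. simpl in hy. unfold AbsRing_ball, abs, minus, plus, opp in hy. simpl in hy.
  rewrite Ropp_0, Rplus_0_r in hy.
  rewrite Rplus_0_l.
  assert (h1 : Rabs y < del) by (eapply Rlt_le_trans; [apply hy|apply Rmin_l]).
  assert (h2 : Rabs y < eps / (Rabs K + 1)) by (eapply Rlt_le_trans; [apply hy|apply Rmin_r]).
  eapply Rle_lt_trans. apply H; auto.
  assert (K * Rabs y <= Rabs K * Rabs y) by (apply Rmult_le_compat_r; [apply Rabs_pos|apply Rle_abs]).
  assert (Rabs K * Rabs y <= Rabs K * (eps / (Rabs K + 1))) by (apply Rmult_le_compat_l; [apply Rabs_pos|lra]).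
  assert (Rabs K * (eps / (Rabs K + 1)) < eps).
  { pose proof (cond_pos eps). apply (Rmult_lt_reg_r (Rabs K + 1)); auto.
    replace (Rabs K * (eps / (Rabs K + 1)) * (Rabs K + 1)) with (Rabs K * eps) by (field; lra). nra. }
  lra.
Qed.

Section Flow.
Variables (Om g Re k c0 r0 : R).
Hypothesis hk : 0 < k.
Hypothesis hr0 : r0 < 0.
Let c := wave_speed Om g k c0.

Lemma fshape0 : fshape Om g Re k c0 0 = 0.
Proof. unfold fshape. ring. Qed.

Lemma lagr_s0 q r t : lagr Om g Re k c0 (mk3 q r 0) t =
  mk3 (phiF k c c0 t q r) 0 (chiF k c t q r).
Proof.
  unfold lagr, phiF, chiF, v1, v2, v3, mk3. simpl. rewrite fshape0.
  replace (r - 0) with r by ring. reflexivity.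
Qed.

Lemma lagr_vel_eq q r s t : lagr_vel Om g Re k c0 (mk3 q r s) t =
  mk3 (- c0 + c * exp (k * (r - fshape Om g Re k c0 s)) * cos (k * (q - c * t))) 0
      (c * exp (k * (r - fshape Om g Re k c0 s)) * sin (k * (q - c * t))).
Proof.
  unfold lagr_vel. fold c. unfold mk3. f_equal; [f_equal|].
  - apply is_derive_unique. unfold c, lagr, v1, v2, v3, mk3; simpl.
    auto_derive; auto. unfold Rminus. field. apply Rgt_not_eq; lra.
  - unfold lagr, v2, mk3; simpl. apply Derive_const.
  - apply is_derive_unique. unfold c, lagr, v1, v2, v3, mk3; simpl.
    auto_derive; auto. unfold Rminus. field. apply Rgt_not_eq; lra.
Qed.


Lemma e3_bounds j : Rabs (v1 (e3 j)) <= 1 /\ Rabs (v3 (e3 j)) <= 1.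
Proof.
  destruct j as [|[|j]]; unfold e3, v1, v3, mk3; simpl; rewrite ?Rabs_R0, ?Rabs_R1; lra.
Qed.

Lemma V3_eta (Y : V3) : Y = mk3 (v1 Y) (v2 Y) (v3 Y).
Proof. destruct Y as [[a b] d]. reflexivity. Qed.

Lemma U_near j t q0 rs h : v2 (e3 j) = 0 -> rs < r0 ->
  Rabs h <= (1 - exp (k*r0))^2 * (r0 - rs) / 4 ->
  exists q r, r <= r0 /\ phiF k c c0 t q r = phiF k c c0 t q0 rs + h * v1 (e3 j) /\
    chiF k c t q r = chiF k c t q0 rs + h * v3 (e3 j) /\
    U Om g Re k c0 r0 (add3 (lagr Om g Re k c0 (mk3 q0 rs 0) t) (scal3 h (e3 j))) t =
    mk3 (- c0 + c * k * (chiF k c t q r - r)) 0 (c * k * (q - c0 * t - phiF k c c0 t q r)).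
Proof.
  intros hj hrs hh.
  rewrite lagr_s0.
  set (Y := add3 (mk3 (phiF k c c0 t q0 rs) 0 (chiF k c t q0 rs)) (scal3 h (e3 j))).
  assert (Y1 : v1 Y = phiF k c c0 t q0 rs + h * v1 (e3 j)) by reflexivity.
  assert (Y2 : v2 Y = 0) by (unfold Y, add3, scal3, v2 at 1, mk3; simpl; rewrite hj; unfold v2; simpl; ring).
  assert (Y3 : v3 Y = chiF k c t q0 rs + h * v3 (e3 j)) by reflexivity.
  destruct (e3_bounds j) as [b1 b3].
  assert (hh1 : Rabs (h * v1 (e3 j)) <= Rabs h).
  { rewrite Rabs_mult. pose proof (Rabs_pos h). nra. }
  assert (hh3 : Rabs (h * v3 (e3 j)) <= Rabs h).
  { rewrite Rabs_mult. pose proof (Rabs_pos h). nra. }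
  destruct (label_exists k c c0 t r0 hk hr0 q0 rs (v1 Y) (v3 Y) hrs) as [q' [r' [hr' [E1 E3]]]].
  { rewrite Y1. replace (phiF k c c0 t q0 rs + h * v1 (e3 j) - phiF k c c0 t q0 rs) with (h * v1 (e3 j)) by ring. lra. }
  { rewrite Y3. replace (chiF k c t q0 rs + h * v3 (e3 j) - chiF k c t q0 rs) with (h * v3 (e3 j)) by ring. lra. }
  set (Pr := fun L => label_ok Om g Re k c0 r0 L /\ lagr Om g Re k c0 L t = Y).
  assert (HP : Pr (epsilon V3_inhabited Pr)).
  { apply epsilon_spec. exists (mk3 q' r' 0). split.
    - unfold label_ok, v2, v3, mk3; simpl. rewrite fshape0. lra.
    - rewrite lagr_s0. rewrite (V3_eta Y). fold c. rewrite E1, E3, Y2. reflexivity. }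
  unfold U. fold Pr.
  destruct (epsilon V3_inhabited Pr) as [[q r] s] eqn:EL.
  destruct HP as [Hok HL].
  assert (hs : s = 0).
  { rewrite <- Y2, <- HL. unfold lagr, v2, mk3; simpl. reflexivity. }
  subst s. change (q, r, 0) with (mk3 q r 0) in *.
  rewrite lagr_s0 in HL.
  assert (F1 : phiF k c c0 t q r = v1 Y) by (rewrite <- HL; reflexivity).
  assert (F3 : chiF k c t q r = v3 Y) by (rewrite <- HL; reflexivity).
  exists q, r. split; [|split; [|split]].
  - destruct Hok. unfold v2, mk3 in *; simpl in *. lra.
  - rewrite F1; exact Y1.
  - rewrite F3; exact Y3.
  - rewrite lagr_vel_eq. fold c. rewrite fshape0.
    unfold chiF, phiF. replace (r - 0) with r by ring.
    unfold mk3. f_equal; [f_equal|]; field; apply Rgt_not_eq; lra.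
Qed.

End Flow.

Lemma quot_bound A B h M : h <> 0 -> Rabs B <= M * h^2 ->
  Rabs (A * (B / h)) <= Rabs A * M * Rabs h.
Proof.
  intros hh HB. unfold Rdiv. rewrite !Rabs_mult, Rabs_inv.
  assert (hp : 0 < Rabs h) by (apply Rabs_pos_lt; auto).
  assert (E : h^2 = Rabs h * Rabs h) by (rewrite <- Rabs_mult; rewrite Rabs_right; [ring|nra]).
  rewrite E in HB.
  replace (Rabs A * M * Rabs h) with (Rabs A * ((M * (Rabs h * Rabs h)) * / Rabs h)) by (field; lra).
  apply Rmult_le_compat_l. apply Rabs_pos. apply Rmult_le_compat_r. left; apply Rinv_0_lt_compat; lra. exact HB.
Qed.

Section Grad.
Variables (Om g Re k c0 r0 : R).
Hypothesis hk : 0 < k.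
Hypothesis hr0 : r0 < 0.
Let c := wave_speed Om g k c0.

Lemma grad_entries t q0 rs (j : nat) : v2 (e3 j) = 0 -> rs < r0 ->
  let a := exp (k*rs) in let th := k*(q0 - c*t) in let Dt := 1 - a^2 in
  let ex := v1 (e3 j) in let ez := v3 (e3 j) in
  let wq := ((1 + a * cos th) * ex + a * sin th * ez)/Dt in
  let wr := ((1 - a * cos th) * ez + a * sin th * ex)/Dt in
  gradU Om g Re k c0 r0 (lagr Om g Re k c0 (mk3 q0 rs 0) t) t 0%nat j = c*k*(ez - wr) /\
  gradU Om g Re k c0 r0 (lagr Om g Re k c0 (mk3 q0 rs 0) t) t 2%nat j = c*k*(wq - ex).
Proof.
  intros hj hrs a th Dt ex ez wq wr.
  pose proof (mb k r0 hk hr0) as hm.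
  set (m := exp (k*r0)) in *.
  set (del := (1 - m)^2 * (r0 - rs) / 4).
  assert (hdel : 0 < del) by (unfold del; apply Rdiv_lt_0_compat; [apply Rmult_lt_0_compat; nra|lra]).
  assert (ha : 0 < a < 1).
  { unfold a. split. apply exp_pos. rewrite <- exp_0. apply exp_increasing. nra. }
  assert (hD : 0 < Dt) by (unfold Dt; nra).
  set (C := 8 * (k*m) / ((1-m)^2 * Dt)).
  assert (hC : 0 <= C).
  { unfold C. apply Rmult_le_pos. apply Rmult_le_pos; [lra|]. apply Rmult_le_pos; lra.
    left; apply Rinv_0_lt_compat. apply Rmult_lt_0_compat; nra. }
  destruct (e3_bounds j) as [b1 b3]. fold ex ez in b1, b3.
  destruct (U_near Om g Re k c0 r0 hk hr0 j t q0 rs 0 hj hrs ltac:(rewrite Rabs_R0; fold m; fold del; lra))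
    as (q00 & r00 & hr00 & P0 & X0 & U0).
  rewrite Rmult_0_l, Rplus_0_r in P0, X0. fold c in P0, X0, U0.
  destruct (inv_lin k c c0 t r0 hk hr0 q0 rs q00 r00 hrs hr00) as [I1 I2].
  rewrite P0, X0, Rminus_diag in I1, I2. fold m in I1, I2.
  replace (0^2+0^2) with 0 in I1, I2 by ring.
  apply Rabs_le_between in I1. apply Rabs_le_between in I2.
  unfold Rdiv in I1, I2. rewrite ?Rmult_0_r, ?Rplus_0_r, ?Rmult_0_l in I1, I2.
  assert (Eq0 : q00 = q0) by lra. assert (Er0 : r00 = rs) by lra.
  subst q00 r00.
  assert (Hh : forall h, Rabs h < del -> exists q r,
     U Om g Re k c0 r0 (add3 (lagr Om g Re k c0 (mk3 q0 rs 0) t) (scal3 h (e3 j))) t =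
       mk3 (- c0 + c * k * (chiF k c t q0 rs + h * ez - r)) 0 (c * k * (q - c0 * t - (phiF k c c0 t q0 rs + h * ex))) /\
     Rabs ((q - q0) - h * wq) <= 2 * C * h^2 /\ Rabs ((r - rs) - h * wr) <= 2 * C * h^2).
  { intros h hh.
    destruct (U_near Om g Re k c0 r0 hk hr0 j t q0 rs h hj hrs ltac:(fold m; unfold del in hh; lra))
      as (q & r & hr & Pq & Xq & Uq). fold c in Pq, Xq, Uq.
    exists q, r. split.
    - rewrite Uq. rewrite Pq, Xq. reflexivity.
    - destruct (inv_lin k c c0 t r0 hk hr0 q0 rs q r hrs hr) as [J1 J2].
      rewrite Pq, Xq in J1, J2. fold m a th Dt C in J1, J2.
      replace (phiF k c c0 t q0 rs + h * v1 (e3 j) - phiF k c c0 t q0 rs) with (h*ex) in J1, J2 by (unfold ex; ring).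
      replace (chiF k c t q0 rs + h * v3 (e3 j) - chiF k c t q0 rs) with (h*ez) in J1, J2 by (unfold ez; ring).
      assert (HB : C * ((h * ex) ^ 2 + (h * ez) ^ 2) <= 2 * C * h^2).
      { assert (ex^2 <= 1) by (rewrite <- (Rsqr_pow2 ex), Rsqr_abs, Rsqr_pow2; pose proof (Rabs_pos ex); nra).
        assert (ez^2 <= 1) by (rewrite <- (Rsqr_pow2 ez), Rsqr_abs, Rsqr_pow2; pose proof (Rabs_pos ez); nra).
        replace ((h * ex) ^ 2 + (h * ez) ^ 2) with (h^2 * (ex^2 + ez^2)) by ring.
        assert (0 <= h^2) by apply pow2_ge_0.
        replace (2 * C * h^2) with (C * (h^2 * 2)) by ring.
        apply Rmult_le_compat_l; auto. nra. }
      split.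
      + replace (h * wq) with (((1 + a * cos th) * (h * ex) + a * sin th * (h * ez)) / Dt)
          by (unfold wq; field; lra). lra.
      + replace (h * wr) with (((1 - a * cos th) * (h * ez) + a * sin th * (h * ex)) / Dt)
          by (unfold wr; field; lra). lra. }
  assert (U0' : U Om g Re k c0 r0 (add3 (lagr Om g Re k c0 (mk3 q0 rs 0) t) (scal3 0 (e3 j))) t =
       mk3 (- c0 + c * k * (chiF k c t q0 rs - rs)) 0 (c * k * (q0 - c0 * t - phiF k c c0 t q0 rs))).
  { exact U0. }
  assert (hck : 0 <= Rabs (c*k) * (2*C)) by (apply Rmult_le_pos; [apply Rabs_pos|lra]).
  unfold gradU. split.
  - apply (Derive_by_bound _ _ del (Rabs (c*k) * (2*C))); auto.
    intros h hh0 hh. destruct (Hh h hh) as (q & r & Uq & _ & Br).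
    cbv beta. rewrite Uq, U0'. unfold comp3, v1, mk3; simpl.
    replace ((- c0 + c * k * (chiF k c t q0 rs + h * ez - r) - (- c0 + c * k * (chiF k c t q0 rs - rs))) / h - c * k * (ez - wr))
      with (- (c*k) * ((r - rs - h * wr) / h)) by (field; auto).
    replace (Rabs (c * k) * (2 * C) * Rabs h) with (Rabs (- (c*k)) * (2 * C) * Rabs h) by (rewrite Rabs_Ropp; ring).
    apply quot_bound; auto.
  - apply (Derive_by_bound _ _ del (Rabs (c*k) * (2*C))); auto.
    intros h hh0 hh. destruct (Hh h hh) as (q & r & Uq & Bq & _).
    cbv beta. rewrite Uq, U0'. unfold comp3, v3, mk3; simpl.
    replace ((c * k * (q - c0 * t - (phiF k c c0 t q0 rs + h * ex)) - c * k * (q0 - c0 * t - phiF k c c0 t q0 rs)) / h - c * k * (wq - ex))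
      with ((c*k) * ((q - q0 - h * wq) / h)) by (field; auto).
    apply quot_bound; auto.
Qed.

End Grad.

Lemma add3_scal0 X v : add3 X (scal3 0 v) = X.
Proof.
  destruct X as [[a b] d]. unfold add3, scal3, mk3, v1, v2, v3; simpl. f_equal; [f_equal|]; ring.
Qed.

Section Star.
Variables (Om g Re k c0 r0 : R).
Hypothesis hk : 0 < k.
Hypothesis hr0 : r0 < 0.
Let c := wave_speed Om g k c0.

Lemma U_star t q0 rs : rs < r0 ->
  U Om g Re k c0 r0 (lagr Om g Re k c0 (mk3 q0 rs 0) t) t = lagr_vel Om g Re k c0 (mk3 q0 rs 0) t.
Proof.
  intros hrs.
  pose proof (mb k r0 hk hr0) as hm.
  assert (hdel : 0 <= (1 - exp (k*r0))^2 * (r0 - rs) / 4)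
    by (apply Rmult_le_pos; [apply Rmult_le_pos; nra|lra]).
  destruct (U_near Om g Re k c0 r0 hk hr0 0 t q0 rs 0 ltac:(reflexivity) hrs ltac:(rewrite Rabs_R0; lra))
    as (q00 & r00 & hr00 & P0 & X0 & U0).
  rewrite Rmult_0_l, Rplus_0_r in P0, X0. fold c in P0, X0, U0.
  rewrite add3_scal0 in U0.
  destruct (inv_lin k c c0 t r0 hk hr0 q0 rs q00 r00 hrs hr00) as [I1 I2].
  rewrite P0, X0, Rminus_diag in I1, I2.
  replace (0^2+0^2) with 0 in I1, I2 by ring.
  apply Rabs_le_between in I1. apply Rabs_le_between in I2.
  unfold Rdiv in I1, I2. rewrite ?Rmult_0_r, ?Rplus_0_r, ?Rmult_0_l in I1, I2.
  assert (Eq0 : q00 = q0) by lra. assert (Er0 : r00 = rs) by lra.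
  subst q00 r00. rewrite U0, lagr_vel_eq by auto. fold c. rewrite fshape0.
  unfold chiF, phiF. replace (rs - 0) with rs by ring.
  unfold mk3. f_equal; [f_equal|]; field; apply Rgt_not_eq; lra.
Qed.

Lemma grad_row1 X t j : gradU Om g Re k c0 r0 X t 1%nat j = 0.
Proof.
  unfold gradU.
  replace (fun h => comp3 1 (U Om g Re k c0 r0 (add3 X (scal3 h (e3 j))) t)) with (fun _ : R => 0).
  apply Derive_const.
  apply functional_extensionality. intro h.
  unfold U. destruct (epsilon _ _) as [[q r] s].
  unfold lagr_vel, comp3, mk3, v2; simpl.
  symmetry. apply Derive_const.
Qed.

End Star.

Lemma ode_alg Om ck a s co E mu nn :
  1 - a^2 <> 0 -> nn <> 0 ->
  s^2 + co^2 = 1 ->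
  let Dt := 1 - a^2 in
  let kap := ck*a/Dt in let om := kap*a - 2*Om - ck/2 in
  let v1 := kap - om in let v2 := - mu in let al := - ck / 2 in
  mu * mu = v1 * (kap + om) ->
  let b1 := E*(co*v1 - s*v2)/nn in let b3 := E*(s*v1 + co*v2)/nn in
  let sn := 2*s*co in let cs := co*co - s*s in
  let G00 := ck*(0 - ((1 - a*cs)*0 + a*sn*1)/Dt) in
  let G02 := ck*(1 - ((1 - a*cs)*1 + a*sn*0)/Dt) in
  let G20 := ck*(((1 + a*cs)*1 + a*sn*0)/Dt - 1) in
  let G22 := ck*(((1 + a*cs)*0 + a*sn*1)/Dt - 0) in
  mu*E*(co*v1 - s*v2)/nn + E*(-(s*al)*v1 - co*al*v2)/nn = -(2*Om*b3 + (G00*b1 + G02*b3)) /\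
  mu*E*(s*v1 + co*v2)/nn + E*(co*al*v1 - s*al*v2)/nn = -(-(2*Om)*b1 + (G20*b1 + G22*b3)).
Proof.
  intros hD hn hsc Dt kap om v1 v2 al hmu b1 b3 sn cs G00 G02 G20 G22.
  set (q := s^2 + co^2 - 1). set (Delta := v1*(kap+om) - mu*mu).
  assert (hq : q = 0) by (unfold q; lra).
  assert (hde : Delta = 0) by (unfold Delta; lra).
  split.
  - assert (X : mu*E*(co*v1 - s*v2)/nn + E*(-(s*al)*v1 - co*al*v2)/nn - (-(2*Om*b3 + (G00*b1 + G02*b3)))
      = (E/nn)*(-s*Delta + kap*q*(-co*mu - s*v1))).
    { unfold q, Delta, b1, b3, G00, G02, G20, G22, sn, cs, v1, v2, al, om, kap, Dt. field. auto. }
    rewrite hq, hde in X. lra.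
  - assert (X : mu*E*(s*v1 + co*v2)/nn + E*(co*al*v1 - s*al*v2)/nn - (-(-(2*Om)*b1 + (G20*b1 + G22*b3)))
      = (E/nn)*(co*Delta + kap*q*(-s*mu + co*v1))).
    { unfold q, Delta, b1, b3, G00, G02, G20, G22, sn, cs, v1, v2, al, om, kap, Dt. field. auto. }
    rewrite hq, hde in X. lra.
Qed.

Lemma lagr_has_deriv Om g Re k c0 L t : has_deriv3 (lagr Om g Re k c0 L) t (lagr_vel Om g Re k c0 L t).
Proof.
  destruct L as [[q r] s].
  unfold has_deriv3. split; [|split]; apply Derive_correct;
  unfold lagr, v1, v2, v3, mk3; simpl; auto_derive; auto.
Qed.

Lemma norm3_e2 : norm3 (mk3 0 1 0) = 1.
Proof. unfold norm3, dot3, v1, v2, v3, mk3; simpl. replace (0*0+1*1+0*0) with 1 by ring. apply sqrt_1. Qed.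

Lemma norm3_b E s co p1 p2 nn : 0 <= E -> 0 < nn -> nn^2 = p1^2 + p2^2 -> s^2 + co^2 = 1 ->
  norm3 (mk3 (E*(co*p1 - s*p2)/nn) 0 (E*(s*p1 + co*p2)/nn)) = E.
Proof.
  intros hE hn hnn hsc. unfold norm3, dot3, v1, v2, v3, mk3; simpl.
  replace (E * (co * p1 - s * p2) / nn * (E * (co * p1 - s * p2) / nn) + 0 * 0 +
     E * (s * p1 + co * p2) / nn * (E * (s * p1 + co * p2) / nn)) with (E*E).
  apply sqrt_square; auto.
  replace (E * (co * p1 - s * p2) / nn * (E * (co * p1 - s * p2) / nn) + 0 * 0 +
     E * (s * p1 + co * p2) / nn * (E * (s * p1 + co * p2) / nn)) with
     (E*E*((s^2+co^2)*(p1^2+p2^2))/nn^2) by (field; lra).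
  rewrite hsc, <- hnn. field. lra.
Qed.

Theorem proposition1 (Om g Re k c0 r0 : R)
  (hOm : 0 < Om) (hg : 0 < g) (hRe : 0 < Re) (hk : 0 < k)
  (hgamma : 0 < 2 * Om * c0 + g)
  (hc0 : c0 <> wave_speed Om g k c0)
  (hr0 : r0 < 0)
  (hsteep : exp (k * r0) >
            (3 * Om + sqrt (Om ^ 2 + k * (2 * Om * c0 + g)))
            / (Om + 3 * sqrt (Om ^ 2 + k * (2 * Om * c0 + g)))) :
  exists X0 : V3,
    in_fluid Om g Re k c0 r0 0 X0 /\
    Rbar_lt (Finite 0) (Lambda Om g Re k c0 r0 X0).
Proof.
  set (S := sqrt (Om ^ 2 + k * (2 * Om * c0 + g))) in *.
  assert (hS : Om < S).
  { unfold S. rewrite <- (sqrt_pow2 Om) at 1 by lra. apply sqrt_lt_1_alt. split. nra. nra. }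
  set (T := (3 * Om + S) / (Om + 3 * S)) in *.
  assert (hT : 0 < T) by (unfold T; apply Rdiv_lt_0_compat; lra).
  set (c := wave_speed Om g k c0).
  assert (hkc : c * k = S - Om) by (unfold c, wave_speed; fold S; field; lra).
  assert (hc : 0 < c) by (apply (Rmult_lt_reg_r k); lra).
  assert (hlnT : ln T < k * r0).
  { rewrite <- (ln_exp (k*r0)). apply ln_increasing; lra. }
  set (rs := (r0 + ln T / k)/2).
  assert (hrs : rs < r0).
  { unfold rs. assert (ln T / k < r0). { apply (Rmult_lt_reg_r k); auto. unfold Rdiv. rewrite Rmult_assoc, Rinv_l by lra. lra. } lra. }
  set (a := exp (k*rs)).
  assert (haT : T < a).
  { unfold a. rewrite <- (exp_ln T) at 1 by auto. apply exp_increasing. unfold rs.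
    replace (k * ((r0 + ln T / k) / 2)) with ((k*r0 + ln T)/2) by (field; lra). lra. }
  assert (ha : 0 < a < 1).
  { unfold a. split. apply exp_pos. rewrite <- exp_0. apply exp_increasing. nra. }
  set (Dt := 1 - a^2).
  assert (hDt : 0 < Dt) by (unfold Dt; nra).
  set (kap := c*k*a/Dt).
  set (om := kap*a - 2*Om - c*k/2).
  assert (hkap : 0 < kap) by (unfold kap; apply Rdiv_lt_0_compat; auto; nra).
  assert (hm1 : 0 < kap - om).
  { unfold om. assert (0 < kap * (1 - a)) by nra. nra. }
  assert (hp1 : 0 < kap + om).
  {
    assert (h1 : a * (Om + 3*S) > 3*Om + S).
    { unfold T in haT. apply (Rmult_lt_compat_r (Om + 3*S)) in haT; [|lra].
      unfold Rdiv in haT. rewrite Rmult_assoc, Rinv_l in haT by lra. lra. }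
    assert (kap * (1 + a) = c * k * a / (1 - a)).
    { unfold kap, Dt. field; repeat split; intro; nra. }
    assert (c * k * a / (1 - a) > 2*Om + c*k/2).
    { rewrite hkc. apply (Rmult_lt_reg_r (1 - a)). lra. unfold Rdiv.
      rewrite Rmult_assoc, Rinv_l by lra. nra. }
    unfold om. nra. }
  set (mu := sqrt ((kap - om)*(kap + om))).
  assert (hmu : mu * mu = (kap - om)*(kap + om)) by (unfold mu; apply sqrt_sqrt; nra).
  assert (hmu0 : 0 < mu) by (unfold mu; apply sqrt_lt_R0; nra).
  set (nn := sqrt ((kap - om)^2 + (- mu)^2)).
  assert (hnn : nn^2 = (kap - om)^2 + (-mu)^2).
  { unfold nn. rewrite <- Rsqr_pow2. apply Rsqr_sqrt. nra. }
  assert (hnn0 : 0 < nn) by (unfold nn; apply sqrt_lt_R0; nra).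
  set (al := fun t => k*(0 - c*t)/2).
  set (bf := fun t => mk3 (exp (mu*t) * (cos (al t) * (kap - om) - sin (al t) * (- mu)) / nn) 0
                          (exp (mu*t) * (sin (al t) * (kap - om) + cos (al t) * (- mu)) / nn)).
  set (L0 := mk3 0 rs 0).
  set (Xf := fun t => lagr Om g Re k c0 L0 t).
  set (xif := fun _ : R => mk3 0 1 0).
  assert (hnorm : forall t, norm3 (bf t) = exp (mu*t)).
  { intro t. unfold bf. apply norm3_b. left; apply exp_pos. auto. auto.
    pose proof (sin2_cos2 (al t)). unfold Rsqr in H. lra. }
  assert (Hwkb : wkb_solution Om g Re k c0 r0 (Xf 0) (mk3 0 1 0) (bf 0) Xf xif bf).
  { unfold wkb_solution. split; [reflexivity|]. split; [reflexivity|]. split; [reflexivity|].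
    intros t _. cbv zeta.
    unfold Xf, L0, xif.
    assert (hy : v2 (lagr Om g Re k c0 (mk3 0 rs 0) t) = 0) by (rewrite lagr_s0; reflexivity).
    rewrite hy.
    split; [|split].
    - rewrite (U_star Om g Re k c0 r0 hk hr0) by auto. apply lagr_has_deriv.
    - set (G := gradU Om g Re k c0 r0 (lagr Om g Re k c0 (mk3 0 rs 0) t) t).
      assert (r1 : forall j, G 1%nat j = 0) by (intro; apply grad_row1).
      unfold has_deriv3, opp3, scal3, mulMV, transp, mk3, v1, v2, v3; simpl.
      rewrite !r1.
      split; [|split]; (match goal with |- is_derive _ _ ?v => replace v with 0 by ring end); auto_derive; auto.
    - set (G := gradU Om g Re k c0 r0 (lagr Om g Re k c0 (mk3 0 rs 0) t) t).
      assert (r1 : forall j, G 1%nat j = 0) by (intro; apply grad_row1).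
      destruct (grad_entries Om g Re k c0 r0 hk hr0 t 0 rs 0%nat eq_refl hrs) as [g00 g20].
      destruct (grad_entries Om g Re k c0 r0 hk hr0 t 0 rs 2%nat eq_refl hrs) as [g02 g22].
      fold G c in g00, g20, g02, g22.
      change (v1 (e3 0%nat)) with 1 in g00, g20.
      change (v3 (e3 0%nat)) with 0 in g00, g20.
      change (v1 (e3 2%nat)) with 0 in g02, g22.
      change (v3 (e3 2%nat)) with 1 in g02, g22.
      assert (hth : k * (0 - c * t) = 2 * al t) by (unfold al; field).
      rewrite hth, sin_2a, cos_2a in g00, g20, g02, g22.
      assert (hsc : sin (al t) ^ 2 + cos (al t) ^ 2 = 1).
      { pose proof (sin2_cos2 (al t)). unfold Rsqr in H. lra. }
      destruct (ode_alg Om (c*k) a (sin (al t)) (cos (al t)) (exp (mu*t)) mu nn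
        ltac:(fold Dt; lra) ltac:(lra) hsc hmu) as [O1 O3].
      unfold has_deriv3. split; [|split].
      + match goal with |- is_derive _ _ ?v => assert (Ev : v = -(2*Om*v3 (bf t) + (G 0%nat 0%nat * v1 (bf t) + G 0%nat 2%nat * v3 (bf t)))) end.
        { unfold add3, opp3, scal3, mulMV, Lmat, mk3, v1, v2, v3, bf; simpl. ring. }
        rewrite Ev, g00, g02. clear Ev.
        cbv zeta in O1.
        match goal with |- is_derive _ _ ?v => replace v with
          (mu*exp(mu*t)*(cos(al t)*(kap-om) - sin(al t)*(-mu))/nn + exp(mu*t)*(-(sin(al t)*(-(c*k)/2))*(kap-om) - cos(al t)*(-(c*k)/2)*(-mu))/nn)
          by (exact O1) end.
        change (fun tau => v1 (bf tau)) with (fun tau => exp (mu*tau) * (cos (al tau) * (kap - om) - sin (al tau) * - mu) / nn).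
        unfold al. auto_derive; auto. unfold Rminus, Rdiv. field. apply Rgt_not_eq; lra.
      + match goal with |- is_derive _ _ ?v => replace v with 0 end.
        change (fun tau => v2 (bf tau)) with (fun _ : R => 0). auto_derive; auto.
        unfold add3, opp3, scal3, mulMV, dot3, Lmat, mk3, v1, v2, v3, bf; simpl. rewrite !r1. field.
        split. apply Rgt_not_eq; lra. change (norm3 (mk3 0 1 0) <> 0). rewrite norm3_e2. lra.
      + match goal with |- is_derive _ _ ?v => assert (Ev : v = -(-(2*Om)*v1 (bf t) + (G 2%nat 0%nat * v1 (bf t) + G 2%nat 2%nat * v3 (bf t)))) end.
        { unfold add3, opp3, scal3, mulMV, Lmat, mk3, v1, v2, v3, bf; simpl. ring. }
        rewrite Ev, g20, g22. clear Ev.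
        cbv zeta in O3.
        match goal with |- is_derive _ _ ?v => replace v with
          (mu*exp(mu*t)*(sin(al t)*(kap-om) + cos(al t)*(-mu))/nn + exp(mu*t)*(cos(al t)*(-(c*k)/2)*(kap-om) - sin(al t)*(-(c*k)/2)*(-mu))/nn)
          by (exact O3) end.
        change (fun tau => v3 (bf tau)) with (fun tau => exp (mu*tau) * (sin (al tau) * (kap - om) + cos (al tau) * - mu) / nn).
        unfold al. auto_derive; auto. unfold Rminus, Rdiv. field. apply Rgt_not_eq; lra. }
  exists (Xf 0). split.
  { exists L0. split; [|reflexivity]. unfold label_ok, L0, v2, v3, mk3; simpl.
    rewrite fshape0. lra. }
  assert (Hsup : forall t, Rbar_le (Finite (exp (mu*t))) (sup_amp Om g Re k c0 r0 (Xf 0) t)).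
  { intro t. unfold sup_amp.
    match goal with |- Rbar_le _ (Rbar_lub ?E) => destruct (proj2_sig (Rbar_ex_lub E)) as [ub _]; apply ub end.
    exists (mk3 0 1 0), (bf 0), Xf, xif, bf.
    split; [apply norm3_e2|]. split.
    { rewrite hnorm. rewrite Rmult_0_r. apply exp_0. }
    split. { unfold dot3, bf, v1, v2, v3, mk3; simpl. ring. }
    split; [exact Hwkb|]. rewrite hnorm. reflexivity. }
  assert (Hgr : forall t, 1 <= t -> Rbar_le (Finite mu) (growth_rate Om g Re k c0 r0 (Xf 0) t)).
  { intros t ht. pose proof (Hsup t) as Hs. unfold growth_rate.
    destruct (sup_amp Om g Re k c0 r0 (Xf 0) t) as [v| |]; simpl in Hs |- *; auto.
    pose proof (exp_pos (mu*t)).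
    destruct (Rlt_dec 0 v) as [hv|hv]; [|exfalso; lra].
    assert (ln (exp (mu*t)) <= ln v) by (apply ln_le; auto).
    rewrite ln_exp in H0.
    apply (Rmult_le_reg_r t). lra. unfold Rdiv. rewrite Rmult_assoc, Rinv_l by lra. lra. }
  assert (HL : Rbar_le (Finite mu) (Lambda Om g Re k c0 r0 (Xf 0))).
  { unfold Lambda, limsup_infty.
    match goal with |- Rbar_le _ (Rbar_glb ?E) => destruct (proj2_sig (Rbar_ex_glb E)) as [lb glbp]; apply glbp end.
    intros x [T0 Hx]. rewrite Hx.
    match goal with |- Rbar_le _ (Rbar_lub ?E) => destruct (proj2_sig (Rbar_ex_lub E)) as [ub' _] end.
    apply Rbar_le_trans with (growth_rate Om g Re k c0 r0 (Xf 0) (Rmax T0 1)).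
    apply Hgr. apply Rmax_r.
    apply ub'. exists (Rmax T0 1). split; [apply Rmax_l|reflexivity]. }
  apply Rbar_lt_le_trans with (Finite mu); auto.
Qed.
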